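(* Let $(H,\partial)$ be a Cartan–Eilenberg system with associated spectral sequence $(E^r,d^r)_{r\ge1}$. Suppose there are integers $a$ and $b$ such that $d^r_s\colon E^r_s\to E^r_{s-r}$ is zero whenever $s-r\le a$ and $s>b$. Then $\ker(\kappa)=0$, where $\kappa\colon\operatorname{colim}_j\lim_iH(i,j)\to\lim_i\operatorname{colim}_jH(i,j)$ is the interchange morphism.
   Context: Let $\mathcal{A}$ be the abelian category of $\mathbb{Z}$-graded modules over a ring $R$. A Cartan–Eilenberg system $(H,\partial)$ consists of objects $H(i,j)\in\mathcal{A}$ for integers $i\le j$, functorial morphisms $\eta\colon H(i,j)\to H(i',j')$ of internal degree $0$ for $i\le i'$, $j\le j'$, and natural morphisms $\partial\colon H(j,k)\to H(i,j)$ of internal degree $-1$ for $i\le j\le k$ (commuting with $\eta$), such that $H(i,j)\xrightarrow{\eta}H(i,k)\xrightarrow{\eta}H(j,k)\xrightarrow{\partial}H(i,j)$ is exact at each vertex. Its spectral sequence: $E^1_s=H(s-1,s)$; for $r\ge1$, $Z^r_s=\ker(\partial\colon E^1_s\to H(s-r,s-1))$, $B^r_s=\operatorname{im}(\partial\colon H(s,s+r-1)\to E^1_s)$, $E^r_s=Z^r_s/B^r_s$, and $d^r_s\colon E^r_s\to E^r_{s-r}$ is $[x]\mapsto[\partial(\tilde x)]$, where $x\in Z^r_s$, $\tilde x\in H(s-r,s)$ with $\eta(\tilde x)=x$, and $\partial\colon H(s-r,s)\to H(s-r-1,s-r)=E^1_{s-r}$. Limits over $i$ are along $\eta\colon H(i-1,j)\to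 H(i,j)$ as $i\to-\infty$, colimits over $j$ along $\eta\colon H(i,j)\to H(i,j+1)$. The interchange morphism $\kappa$ is the canonical morphism whose restriction to $\lim_iH(i,j)$ followed by projection to $\operatorname{colim}_jH(i,j)$ is $\lim_iH(i,j)\to H(i,j)\to\operatorname{colim}_jH(i,j)$. *)

(* Defs.v *)
From HB Require Import structures.
From mathcomp Require Import all_boot all_order all_algebra.
Set Implicit Arguments. Unset Strict Implicit. Unset Printing Implicit Defensive.
Import Order.TTheory GRing.Theory Num.Theory.
Local Open Scope ring_scope.

(* A Z-graded R-module is represented degreewise: [H i j n] is the degree-n
   component of H(i,j).  Morphisms of internal degree 0 act degreewise
   ([eta ... n]); the boundary [del i j k n] goes from degree n of H(j,k) to
   degree n-1 of H(i,j).  The data for indices outside the ranges stated in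
   the paper (i <= j etc.) are present but unconstrained/irrelevant. *)
Record CESystem (R : pzRingType) := {
  H : int -> int -> int -> lmodType R;
  eta : forall (i j i' j' n : int), {linear H i j n -> H i' j' n};
  del : forall (i j k n : int), {linear H j k n -> H i j (n - 1)};
  eta_id : forall i j n (x : H i j n), i <= j -> eta i j i j n x = x;
  eta_comp : forall i j i' j' i'' j'' n (x : H i j n),
    i <= j -> i <= i' -> i' <= i'' -> j <= j' -> j' <= j'' ->
    eta i' j' i'' j'' n (eta i j i' j' n x) = eta i j i'' j'' n x;
  del_nat : forall i j k i' j' k' n (z : H j k n),
    i <= j -> j <= k -> i' <= j' -> j' <= k' ->
    i <= i' -> j <= j' -> k <= k' ->
    eta i j i' j' (n - 1) (del i j k n z) = del i' j' k' n (eta j k j' k' n z);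
  exact_ik : forall i j k n (y : H i k n), i <= j -> j <= k ->
    (eta i k j k n y = 0 <-> exists x : H i j n, eta i j i k n x = y);
  exact_jk : forall i j k n (z : H j k n), i <= j -> j <= k ->
    (del i j k n z = 0 <-> exists y : H i k n, eta i k j k n y = z);
  exact_ij : forall i j k n (x : H i j (n - 1)), i <= j -> j <= k ->
    (eta i j i k (n - 1) x = 0 <-> exists z : H j k n, del i j k n z = x)
}.

Unset Implicit Arguments.

Section SpectralSequence.
Variables (R : pzRingType) (C : CESystem R).

Definition E1 (s n : int) := H C (s - 1) s n.

Definition in_Z (r s n : int) (x : E1 s n) : Prop :=
  del C (s - r) (s - 1) s n x = 0.

Definition in_B (r s n : int) (x : H C (s - 1) s (n - 1)) : Prop :=
  exists y : H C s (s + r - 1) n, del C (s - 1) s (s + r - 1) n y = x.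

(* d^r_s : E^r_s -> E^r_{s-r}, [x] |-> [del xt] for a lift xt in H(s-r,s) of
   x in Z^r_s, is zero: for every x in Z^r_s and every lift xt,
   del xt lies in B^r_{s-r}. *)
Definition dr_zero (r s : int) : Prop :=
  forall (n : int) (x : E1 s n) (xt : H C (s - r) s n),
    in_Z r s n x -> eta C (s - r) s (s - 1) s n xt = x ->
    in_B r (s - r) n (del C (s - r - 1) (s - r) s n xt).

(* An element of (lim_i H(i,j))_n : a family (x_i)_{i <= j}, x_i in H(i,j)_n,
   compatible with eta : H(i-1,j) -> H(i,j).  (Values at i > j are ignored.) *)
Definition lim_family (j n : int) (x : forall i, H C i j n) : Prop :=
  forall i, i <= j -> eta C (i - 1) j i j n (x (i - 1)) = x i.

Definition colim_zero (i j n : int) (y : H C i j n) : Prop :=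
  exists j', j <= j' /\ eta C i j i j' n y = 0.

Definition colim_lim_zero (j n : int) (x : forall i, H C i j n) : Prop :=
  exists j', j <= j' /\ forall i, i <= j -> eta C i j i j' n (x i) = 0.

(* kappa sends the class of x to the family i |-> [x_i] in
   lim_i colim_j H(i,j); it is zero iff every component is zero. *)
Definition kappa_zero (j n : int) (x : forall i, H C i j n) : Prop :=
  forall i, i <= j -> colim_zero i j n (x i).

Definition kappa_injective : Prop :=
  forall (n j : int) (x : forall i, H C i j n),
    lim_family j n x -> kappa_zero j n x -> colim_lim_zero j n x.

End SpectralSequence.

Arguments dr_zero {R} C r s.
Arguments kappa_injective {R} C.

(* Main.v *)
Require Import Defs.
From HB Require Import structures.
From mathcomp Require Import all_boot all_order all_algebra.
From mathcomp Require Import zify.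
Import Order.TTheory GRing.Theory Num.Theory.
Local Open Scope ring_scope.

Ltac ilia := first [ lia | match goal with |- is_true (@Order.le _ _ ?x ?y) =>
  let h := fresh in have h : (x <= y :> int) by lia; exact h end ].

Lemma Hii0 (R : pzRingType) (C : CESystem R) i n (y : H C i i n) : y = 0.
Proof.
have [_ h] := exact_ik (j := i) y (lexx _) (lexx _).
by rewrite -(eta_id y (lexx i)) h //; exists y; rewrite eta_id.
Qed.

Lemma eta_eta0 (R : pzRingType) (C : CESystem R) i j k n (x : H C i j n) :
  i <= j -> j <= k -> Defs.eta C i k j k n (Defs.eta C i j i k n x) = 0.
Proof. by move=> h1 h2; apply/(exact_ik _ h1 h2); exists x. Qed.

Lemma del_eta0 (R : pzRingType) (C : CESystem R) i j k n (y : H C i k n) :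
  i <= j -> j <= k -> del C i j k n (Defs.eta C i k j k n y) = 0.
Proof. by move=> h1 h2; apply/(exact_jk _ h1 h2); exists y. Qed.

Lemma dr_clean (R : pzRingType) (C : CESystem R) (a b : int) :
  (forall r s : int, 1 <= r -> s - r <= a -> b < s -> dr_zero C r s) ->
  forall t p s n (f : H C t s n), p = s - 1 -> t <= p -> t <= a -> b < s ->
  exists w : H C t p n, del C (t-1) t s n f = del C (t-1) t p n w.
Proof.
move=> hd t p s n f -> htp hta hbs.
have := hd (s - t) s ltac:(lia) ltac:(lia) hbs.
rewrite /dr_zero /in_B /in_Z /E1 (_ : s - (s - t) = t); last by lia.
rewrite (_ : t + (s - t) = s); last by lia.
move=> /(_ n (Defs.eta C t s (s - 1) s n f) f) [].
- by apply: del_eta0; lia.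
- done.
- by move=> w hw; exists w; rewrite hw.
Qed.

Lemma aux (V : zmodType) (f A B : V) : f = A + (f - (A + B) + B).
Proof. by rewrite opprD (addrA f) addrNK [A + _]addrC addrNK. Qed.

Lemma lift_lem (R : pzRingType) (C : CESystem R) (a b : int) :
  (forall r s : int, 1 <= r -> s - r <= a -> b < s -> dr_zero C r s) ->
  forall t t' K : int, t' = t - 1 -> t <= a -> b <= K -> t <= K ->
  forall (k : nat) (q : int), q = K + k%:Z -> forall n (f : H C t q n),
  exists (g : H C t K n) (h : H C t' q n),
    f = Defs.eta C t K t q n g + Defs.eta C t' q t q n h.
Proof.
move=> hd t t' K -> hta hbK htK; elim=> [|k IH] q hq n f.
  rewrite addr0 in hq; subst q.
  by exists f, 0; rewrite raddf0 addr0 eta_id.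
have [w hw] := @dr_clean R C a b hd t (K + k%:Z) q n f ltac:(ilia) ltac:(ilia) hta ltac:(ilia).
have [g [h hwe]] := IH (K + k%:Z) erefl n w.
pose f' := f - Defs.eta C t (K + k%:Z) t q n w.
have hf' : del C (t - 1) t q n f' = 0.
  rewrite /f' raddfB /= hw.
  rewrite -(del_nat (i := t - 1) (j := t) (k := K + k%:Z) (i' := t - 1) (j' := t) (k' := q));
    try ilia.
  by rewrite eta_id ?subrr //; ilia.
have [y hy] := (exact_jk (i := t - 1) f' ltac:(ilia) ltac:(ilia)).1 hf'.
exists g, (y + Defs.eta C (t - 1) (K + k%:Z) (t - 1) q n h).
rewrite raddfD /= hy /f' hwe raddfD /=.
rewrite eta_comp; try ilia.
rewrite (eta_comp h); try ilia.
rewrite eta_comp; try ilia.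
exact: aux.
Qed.

Lemma step_lem (R : pzRingType) (C : CESystem R) (a b : int) :
  (forall r s : int, 1 <= r -> s - r <= a -> b < s -> dr_zero C r s) ->
  forall (i i' J K n : int) (y : H C i J n), i' = i + 1 -> i' <= a -> b <= J ->
  i' <= J -> J <= K -> Defs.eta C i J i K n y = 0 ->
  Defs.eta C i J i' J n y = 0 -> y = 0.
Proof.
move=> hd i i' J K n y -> hia hbJ hiJ hJK.
move: y; rewrite -(addrK 1 n) => y hK hi.
have [e he] := (exact_ij (k := K) y ltac:(ilia) ltac:(ilia)).1 hK.
have hde : del C (i + 1) J K (n + 1) e = 0.
  rewrite -(eta_id e hJK) -?(del_nat (i := i) (j := J) (k := K)) ?he //; ilia.
have [f hf] := (exact_jk (i := i + 1) e ltac:(ilia) ltac:(ilia)).1 hde.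
have [g [h hgh]] := @lift_lem R C a b hd (i + 1) i J ltac:(ilia) hia hbJ hiJ
  `|K - J|%N K ltac:(ilia) (n + 1) f.
rewrite -he -hf hgh raddfD /= eta_comp; try ilia.
rewrite (eta_comp h); try ilia.
rewrite -(eta_comp (i' := J) (j' := J) g); try ilia.
rewrite (@Hii0 R C J (n + 1) (Defs.eta C (i + 1) J J J (n + 1) g)) raddf0 add0r.
by apply: del_eta0; ilia.
Qed.

Lemma upper (x y : int) : exists z : int, x <= z /\ y <= z.
Proof. by case: (lerP x y) => h; [exists y | exists x]; split; ilia. Qed.

Lemma lower (x y : int) : exists z : int, z <= x /\ z <= y.
Proof. by case: (lerP x y) => h; [exists x | exists y]; split; ilia. Qed.

Theorem proposition5p3 (R : pzRingType) (C : CESystem R) (a b : int) :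
  (forall r s : int, 1 <= r -> s - r <= a -> b < s -> dr_zero C r s) ->
  kappa_injective C.
Proof.
move=> hd n j x hlim hkap.
have [i0 [hi0a hi0j]] := lower a j.
have [K0 [hjK0 hK0]] := hkap i0 hi0j.
have [J [hK0J hbJ]] := upper K0 b.
have lim_prev : forall i i' : int, i' = i + 1 -> i' <= j ->
    Defs.eta C i j i' j n (x i) = x i'.
  by move=> i i' -> h; have := hlim (i + 1) h; rewrite addrK.
have hA0 : forall k : nat, i0 + k%:Z <= j ->
    x (i0 + k%:Z) = Defs.eta C i0 j (i0 + k%:Z) j n (x i0).
  elim=> [|k IH] h; first by rewrite addr0 eta_id.
  rewrite -(lim_prev (i0 + k%:Z)); try ilia.
  by rewrite IH; try ilia; rewrite eta_comp //; ilia.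
have hA : forall i : int, i0 <= i -> i <= j -> Defs.eta C i j i J n (x i) = 0.
  move=> i h1 h2.
  have [k ek] : exists k : nat, i = i0 + k%:Z by exists `|i - i0|%N; ilia.
  subst i.
  rewrite hA0; last by ilia.
  rewrite eta_comp; try ilia.
  rewrite -(eta_comp (i' := i0) (j' := K0)); try ilia.
  by rewrite hK0 raddf0.
have hB : forall i i' : int, i' = i + 1 -> i' <= i0 ->
    Defs.eta C i' j i' J n (x i') = 0 -> Defs.eta C i j i J n (x i) = 0.
  move=> i i' ei hi' hx'.
  have [Ki [hjKi hKi]] := hkap i ltac:(ilia).
  have [K [hKiK hJK]] := upper Ki J.
  apply: (@step_lem R C a b hd i i' J K n _ ei); try ilia.
    rewrite eta_comp; try ilia.
    rewrite -(eta_comp (i' := i) (j' := Ki)); try ilia.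
    by rewrite hKi raddf0.
  rewrite eta_comp; try ilia.
  rewrite -(eta_comp (i' := i') (j' := j)); try ilia.
  by rewrite lim_prev //; ilia.
have hB0 : forall k : nat,
    Defs.eta C (i0 - k%:Z) j (i0 - k%:Z) J n (x (i0 - k%:Z)) = 0.
  elim=> [|k IH]; first by rewrite subr0; apply: hA; ilia.
  by apply: (hB _ (i0 - k%:Z)); try ilia; exact IH.
exists J; split; first by ilia.
move=> i hij.
case: (lerP i0 i) => hi; first exact: hA.
have [k ->] : exists k : nat, i = i0 - k%:Z by exists `|i0 - i|%N; ilia.
exact: hB0.
Qed.
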